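(* For a round $t\ge2$, there is a point $W\in\mathbb R^{(t-1)K}$ such that \[\Delta_{t-1}(W)\le 8\sqrt{K/\beta_t},\qquad W\in\mathcal C,\qquad \forall Z\in\mathcal C:\ \mathbb{E}_{x\sim h_{t-1}}\Bigl[\sum_a\frac{Z(x,a)}{W'(x,a)}\Bigr]\le\max\{4K,\beta_t\Delta_{t-1}(Z)^2\}.\] In particular, the value $\mathrm{OPT}_t$ of the RandomizedUCB optimization problem in round $t$ is bounded by $8\sqrt{K/\beta_t}\le110\sqrt{KC_{t-1}/(t-1)}$.
   Context: $A$ is a set of $K$ actions, $X$ a set of contexts, $\Pi$ a finite set of $N$ policies $\pi:X\to A$, $\delta\in(0,1)$. $h_{t-1}=((x_i,a_i,r_i,p_i))_{i=1}^{t-1}$ is a history with $r_i\in[0,1]$, $p_i\in(0,1]$. $C_t=2\log(Nt/\delta)$, $\mu_t=\min\{\frac1{2K},\sqrt{C_t/(2Kt)}\}$, $\beta_t=\frac{t-1}{180C_{t-1}}$. Vectors have coordinates indexed by $(x,a)\in\{x_1,\dots,x_{t-1}\}\times A$; policy $\pi$ is identified with $\pi(x,a)=\mathbb{I}(\pi(x)=a)$; $\mathcal C$ is the convex hull of policy vectors; for a distribution $P$ over $\Pi$, $W_P(x,a)=\sum_{\pi:\pi(x)=a}P(\pi)\in\mathcal C$. $W'(x,a)=(1-K\mu_t)W(x,a)+\mu_t$. $\mathbb{E}_{x\sim h_{t-1}}$ is the average over $x_1,\dots,x_{t-1}$. $\eta_{t-1}(W)=\frac1{t-1}\sum_i r_iW(x_i,a_i)/p_i$,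 $\Delta_{t-1}(W)=\max_{\pi}\eta_{t-1}(\pi)-\eta_{t-1}(W)$. The RandomizedUCB optimization problem in round $t$ is: minimize $\sum_\pi P(\pi)\Delta_{t-1}(\pi)$ over distributions $P$ on $\Pi$ subject to, for all distributions $Q$ over $\Pi$, $\mathbb{E}_{\pi\sim Q}\mathbb{E}_{x\sim h_{t-1}}[1/((1-K\mu_t)W_P(x,\pi(x))+\mu_t)]\le\max\{4K,(t-1)\Delta_{t-1}(W_Q)^2/(180C_{t-1})\}$; $\mathrm{OPT}_t$ is its optimal value. *)

(* Defs.v *)
From HB Require Import structures.
From mathcomp Require Import all_boot all_order all_algebra.
From mathcomp Require Import all_classical all_reals all_analysis.
Set Implicit Arguments. Unset Strict Implicit. Unset Printing Implicit Defensive.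
Import Order.TTheory GRing.Theory Num.Theory.
Local Open Scope classical_set_scope.
Local Open Scope ring_scope.

Section RUCB.
Variables (R : realType) (A : finType) (X : Type) (Pi : finType).
Variables (pol : Pi -> X -> A) (delta : R).

Definition nK : R := #|A|%:R.
Definition nN : R := #|Pi|%:R.

Definition Cc (s : nat) : R := 2 * ln (nN * s%:R / delta).
Definition mu (t : nat) : R :=
  Num.min (1 / (2 * nK)) (Num.sqrt (Cc t / (2 * nK * t%:R))).
Definition beta (t : nat) : R := (t.-1)%:R / (180 * Cc t.-1).

(* vectors indexed by (x,a); only the coordinates with x a context of the
   history matter *)
Definition vec := X -> A -> R.
Definition polvec (p : Pi) : vec := fun x a => (pol p x == a)%:R.
Definition is_dist (P : Pi -> R) := (forall p, 0 <= P p) /\ \sum_p P p = 1.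
Definition WP (P : Pi -> R) : vec := fun x a => \sum_(p | pol p x == a) P p.
Definition Wprime (t : nat) (W : vec) : vec :=
  fun x a => (1 - nK * mu t) * W x a + mu t.

(* history h = ((x_i, a_i, r_i, p_i))_{i < n}, here n = t - 1 *)
Variables (n : nat) (hx : 'I_n -> X) (ha : 'I_n -> A) (hr hp : 'I_n -> R).

Definition Ex (g : X -> R) : R := n%:R^-1 * \sum_i g (hx i).
Definition eta (W : vec) : R := n%:R^-1 * \sum_i hr i * W (hx i) (ha i) / hp i.
Definition Delta (W : vec) : R := sup (range (fun p => eta (polvec p))) - eta W.
Definition inC (W : vec) : Prop :=
  exists P, is_dist P /\ forall i a, W (hx i) a = WP P (hx i) a.

Definition rucb_feasible (t : nat) (P : Pi -> R) : Prop :=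
  is_dist P /\
  forall Q, is_dist Q ->
    \sum_p Q p * Ex (fun x => ((1 - nK * mu t) * WP P x (pol p x) + mu t)^-1)
    <= Num.max (4 * nK) ((t.-1)%:R * Delta (WP Q) ^+ 2 / (180 * Cc t.-1)).
Definition OPT (t : nat) : R :=
  inf [set \sum_p P p * Delta (polvec p) | P in rucb_feasible t].
End RUCB.

(* Main.v *)
Require Import Defs.
From HB Require Import structures.
From mathcomp Require Import all_boot all_order all_algebra.
From mathcomp Require Import all_classical all_reals all_analysis.
From mathcomp Require Import ring lra.
Import Order.TTheory GRing.Theory Num.Theory.
Local Open Scope ring_scope.

Section L15.
Variables (R : realType) (A : finType) (X : Type) (Pi : finType)
  (pol : Pi -> X -> A) (delta : R) (t : nat)
  (hx : 'I_t.-1 -> X) (ha : 'I_t.-1 -> A) (hr hp : 'I_t.-1 -> R).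
Hypotheses (HA : (0 < #|A|)%N) (HPi : (0 < #|Pi|)%N)
  (Hd : 0 < delta < 1) (Ht : (2 <= t)%N)
  (Hr : forall i, 0 <= hr i <= 1) (Hp : forall i, 0 < hp i <= 1).

Local Notation K := (nK R A).
Local Notation m := (mu A Pi delta t).
Local Notation bt := (beta Pi delta t).
Local Notation etaf := (Defs.eta hx ha hr hp).
Local Notation Dl := (Delta pol hx ha hr hp).
Local Notation E := (Ex hx).

Lemma K_ge1 : 1 <= K.
Proof. by rewrite /nK ler1n. Qed.

Lemma n_gt0 : 0 < (t.-1)%:R :> R.
Proof. by rewrite ltr0n; case: t Ht => [|[|]]. Qed.

Lemma N_ge1 : 1 <= nN R Pi.
Proof. by rewrite /nN ler1n. Qed.

Lemma Cc_gt0 s : (1 <= s)%N -> 0 < Cc Pi delta s.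
Proof.
move=> hs; rewrite /Cc mulr_gt0 // ln_gt0 //.
case/andP: Hd => d0 d1.
rewrite ltr_pdivlMr // mul1r.
apply: (lt_le_trans d1).
have s1 : 1 <= s%:R :> R by rewrite ler1n.
have := N_ge1; nra.
Qed.

Lemma mu_gt0 : 0 < m.
Proof.
rewrite /mu lt_min; apply/andP; split.
  by rewrite divr_gt0 // mulr_gt0 // (lt_le_trans _ K_ge1).
rewrite sqrtr_gt0 divr_gt0 ?Cc_gt0 ?mulr_gt0 ?(lt_le_trans _ K_ge1) //.
  by case: t Ht => [|[|]].
by rewrite ltr0n; case: t Ht => [|[|]].
Qed.

Lemma Kmu_le : K * m <= 1/2.
Proof.
have : m <= 1 / (2 * K) by rewrite /mu ge_min lexx.
have K0 : 0 < K by rewrite (lt_le_trans _ K_ge1).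
rewrite ler_pdivlMr ?mulr_gt0 // => h. nra.
Qed.

Lemma beta_gt0 : 0 < bt.
Proof.
rewrite /beta divr_gt0 ?n_gt0 // mulr_gt0 // Cc_gt0 //.
by case: t Ht => [|[|]].
Qed.


Lemma WP_sum (P : Pi -> R) x a :
  WP pol P x a = \sum_p P p * polvec R pol p x a.
Proof.
rewrite /WP /polvec big_mkcond /=; apply: eq_bigr => p _.
by case: eqP => _; rewrite ?mulr1 ?mulr0.
Qed.

Lemma WP_ge0 (P : Pi -> R) : is_dist P -> forall x a, 0 <= WP pol P x a.
Proof. by case=> P0 _ x a; apply: sumr_ge0 => p _. Qed.

Lemma WP_sumA (P : Pi -> R) : is_dist P -> forall x, \sum_a WP pol P x a = 1.
Proof.
case=> _ P1 x; rewrite -P1 /WP.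
rewrite (partition_big (fun p => pol p x) predT) //=.
Qed.

Lemma WP_le1 (P : Pi -> R) : is_dist P -> forall x a, WP pol P x a <= 1.
Proof.
move=> dP x a; rewrite -(WP_sumA P dP x) (bigD1 a) //= lerDl.
by apply: sumr_ge0 => b _; apply: WP_ge0.
Qed.

Lemma Wp_bounds (W : vec R A X) x a : 0 <= W x a <= 1 ->
  m <= Wprime Pi delta t W x a <= 1.
Proof.
case/andP=> w0 w1; rewrite /Wprime.
have := Kmu_le; have := mu_gt0; have := K_ge1 => k1 m0 km.
apply/andP; split; first nra.
nra.
Qed.

Lemma eta_lin (P : Pi -> R) (V : Pi -> vec R A X) :
  etaf (fun x a => \sum_p P p * V p x a) = \sum_p P p * etaf (V p).
Proof.
rewrite /Defs.eta.
under [RHS]eq_bigr => p _ do rewrite mulrCA mulr_sumr.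
rewrite -mulr_sumr; congr (_ * _).
rewrite exchange_big /=; apply: eq_bigr => i _.
rewrite mulr_sumr mulr_suml; apply: eq_bigr => p _.
by rewrite mulrA [hr i * _]mulrC -!mulrA.
Qed.

Lemma eta_ext (W W' : vec R A X) :
  (forall i a, W (hx i) a = W' (hx i) a) -> etaf W = etaf W'.
Proof. by move=> h; rewrite /Defs.eta; congr (_ * _); apply: eq_bigr => i _; rewrite h. Qed.

Lemma Ex_ext (g g' : X -> R) :
  (forall i, g (hx i) = g' (hx i)) -> E g = E g'.
Proof. by move=> h; rewrite /Ex; congr (_ * _); apply: eq_bigr => i _; rewrite h. Qed.

Lemma Ex_le (g g' : X -> R) :
  (forall i, g (hx i) <= g' (hx i)) -> E g <= E g'.
Proof.
move=> h; rewrite /Ex ler_pM2l ?invr_gt0 ?n_gt0 //.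
by apply: ler_sum => i _.
Qed.

Lemma Ex_cst (c : R) : E (fun _ => c) = c.
Proof.
rewrite /Ex sumr_const card_ord -[c *+ _]mulr_natl mulrA mulVf ?mul1r //.
by rewrite gt_eqF // n_gt0.
Qed.

Lemma ExD (g g' : X -> R) : E (fun x => g x + g' x) = E g + E g'.
Proof. by rewrite /Ex big_split mulrDr. Qed.

Lemma ExZ (c : R) (g : X -> R) : E (fun x => c * g x) = c * E g.
Proof. by rewrite /Ex -mulr_sumr mulrCA. Qed.

Definition Mx := sup (range (fun p => etaf (polvec R pol p))).

Lemma pstar : exists ps, forall p, etaf (polvec R pol p) <= etaf (polvec R pol ps).
Proof.
have [p0 _] : exists p0 : Pi, true.
  by case/card_gt0P: HPi => p _; exists p.
exists [arg max_(p > p0) etaf (polvec R pol p)]%O.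
by case: (arg_maxP (fun p => etaf (polvec R pol p)) (erefl true : (fun _ => true) p0)) => p _ H q; exact: H.
Qed.

Lemma Mx_ub p : etaf (polvec R pol p) <= Mx.
Proof.
case: pstar => ps hps.
apply: ub_le_sup; last by exists p.
by exists (etaf (polvec R pol ps)) => _ [q _ <-].
Qed.

Lemma Mx_att : exists ps, etaf (polvec R pol ps) = Mx.
Proof.
case: pstar => ps hps; exists ps; apply/eqP; rewrite eq_le Mx_ub /=.
apply: ge_sup; first by exists (etaf (polvec R pol ps)), ps.
by move=> _ [q _ <-].
Qed.

Lemma Dl_def (W : vec R A X) : Dl W = Mx - etaf W.
Proof. by []. Qed.

Lemma eta_WP (P : Pi -> R) : etaf (WP pol P) = \sum_p P p * etaf (polvec R pol p).
Proof.
rewrite -eta_lin; apply: eta_ext => i a; exact: WP_sum.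
Qed.

Lemma Dl_WP (P : Pi -> R) : is_dist P -> Dl (WP pol P) = \sum_p P p * (Mx - etaf (polvec R pol p)).
Proof.
case=> _ P1; rewrite Dl_def eta_WP.
under [RHS]eq_bigr => p _ do rewrite mulrBr.
by rewrite sumrB -mulr_suml P1 mul1r.
Qed.

Lemma Dl_WP_ge0 (P : Pi -> R) : is_dist P -> 0 <= Dl (WP pol P).
Proof.
move=> dP; rewrite Dl_WP //; apply: sumr_ge0 => p _.
case: dP => P0 _; rewrite mulr_ge0 // subr_ge0; exact: Mx_ub.
Qed.


Lemma ln_le_sub1 (x : R) : 0 < x -> ln x <= x - 1.
Proof.
move=> x0; have := expR_ge1Dx (ln x); rewrite lnK ?posrE //; lra.
Qed.

Lemma kp (c mu0 s w z : R) : 0 < mu0 -> 0 <= c <= 1 -> 0 <= w <= 1 ->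
  0 <= z <= 1 -> 0 < s <= 1 ->
  ln (c * w + mu0) - ln (c * ((1 - s) * w + s * z) + mu0)
  <= - (s * c) * ((z - w) / (c * w + mu0)) + s ^+ 2 / mu0 ^+ 2.
Proof.
move=> m0 /andP[c0 c1] /andP[w0 w1] /andP[z0 z1] /andP[s0 s1].
set a := c * w + mu0; set b := c * ((1 - s) * w + s * z) + mu0.
have a0 : mu0 <= a by rewrite /a; nra.
have b0 : mu0 <= b.
  rewrite /b; have : 0 <= (1 - s) * w + s * z by nra. nra.
have ap : 0 < a by lra.
have bp : 0 < b by lra.
rewrite -ln_div ?posrE //.
have hl := @ln_le_sub1 _ (divr_gt0 ap bp : 0 < a / b).
apply: (le_trans hl).
set d := s * c * (z - w).
have dbd : d ^+ 2 <= s ^+ 2.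
  rewrite /d; have h1 : (c * (z - w)) ^+ 2 <= 1.
    have : -1 <= c * (z - w) <= 1 by apply/andP; split; nra.
    case/andP => h2 h3; nra.
  have : s * c * (z - w) = s * (c * (z - w)) by rewrite mulrA.
  move=> ->; rewrite exprMn; have : 0 <= s ^+ 2 by rewrite sqr_ge0. nra.
have e1 : a / b - 1 = - d / a + d ^+ 2 / (a * b).
  have -> : d = b - a by rewrite /d /a /b; ring.
  by field; apply/andP; split; rewrite gt_eqF.
rewrite e1.
have -> : - (s * c) * ((z - w) / a) = - d / a by rewrite /d; field; rewrite gt_eqF.
rewrite lerD2l.
have abm : mu0 ^+ 2 <= a * b by rewrite expr2; apply: ler_pM => //; lra.
apply: (@le_trans _ _ (d ^+ 2 / mu0 ^+ 2)).
  apply: ler_wpM2l; first exact: sqr_ge0.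
  by rewrite lef_pV2 ?posrE ?exprn_gt0 ?mulr_gt0.
by apply: ler_wpM2r => //; rewrite invr_ge0 sqr_ge0.
Qed.


Local Notation cc := (1 - K * m).
Local Notation Wp := (Wprime Pi delta t).

Lemma cc_bounds : 1/2 <= cc <= 1.
Proof. have := Kmu_le; have := mu_gt0; have := K_ge1 => *; apply/andP; split; nra. Qed.

Lemma WP_bounds (P : Pi -> R) : is_dist P -> forall x a, 0 <= WP pol P x a <= 1.
Proof. by move=> dP x a; rewrite WP_ge0 ?WP_le1. Qed.

Definition Fv (lam : R) (P : Pi -> R) : R :=
  E (fun x => - \sum_a ln (Wp (WP pol P) x a)) - lam * etaf (WP pol P).

Lemma eta_WP_le (P : Pi -> R) : is_dist P -> etaf (WP pol P) <= Mx.
Proof.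
case=> P0 P1; rewrite eta_WP.
apply: (@le_trans _ _ (\sum_p P p * Mx)).
  by apply: ler_sum => p _; apply: ler_wpM2l => //; exact: Mx_ub.
by rewrite -mulr_suml P1 mul1r.
Qed.

Lemma Fv_lb (lam : R) (P : Pi -> R) : 0 <= lam -> is_dist P -> - lam * Mx <= Fv lam P.
Proof.
move=> l0 dP.
have h1 : 0 <= E (fun x => - \sum_a ln (Wp (WP pol P) x a)).
  rewrite -{1}(Ex_cst 0); apply: Ex_le => i /=; rewrite oppr_ge0.
  apply: sumr_le0 => a _; apply: ln_le0.
  by case/andP: (Wp_bounds _ _ _ (WP_bounds P dP (hx i) a)).
have h2 := eta_WP_le P dP.
rewrite /Fv; nra.
Qed.

Lemma unif_dist : is_dist (fun _ : Pi => (#|Pi|%:R : R)^-1).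
Proof.
split=> [p|]; first by rewrite invr_ge0 ler0n.
rewrite sumr_const -[_ *+ _]mulr_natl mulfV // pnatr_eq0 -lt0n //.
Qed.

Lemma approx (lam eps : R) : 0 <= lam -> 0 < eps ->
  exists2 P0, is_dist P0 & forall Q, is_dist Q -> Fv lam P0 < Fv lam Q + eps.
Proof.
move=> l0 e0.
set S := [set Fv lam P | P in (@is_dist R Pi : set (Pi -> R))]%classic.
have hinf : has_inf S.
  split; first by exists (Fv lam (fun _ : Pi => (#|Pi|%:R : R)^-1)); exists (fun _ : Pi => (#|Pi|%:R : R)^-1) => //; exact: unif_dist.
  by exists (- lam * Mx) => _ [P dP <-]; exact: Fv_lb.
have [_ [P0 dP0 <-] he] := inf_adherent e0 hinf.
exists P0 => // Q dQ.
have : inf S <= Fv lam Q by apply: (ge_inf hinf.2); exists Q.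
move=> h; lra.
Qed.

Definition mix (s : R) (P Q : Pi -> R) := fun p => (1 - s) * P p + s * Q p.

Lemma mix_dist s (P Q : Pi -> R) : 0 <= s <= 1 -> is_dist P -> is_dist Q -> is_dist (mix s P Q).
Proof.
move=> /andP[s0 s1] [P0 P1] [Q0 Q1]; split=> [p|].
  by rewrite /mix addr_ge0 // mulr_ge0 // subr_ge0.
by rewrite /mix big_split /= -!mulr_sumr P1 Q1; ring.
Qed.

Lemma WP_mix s (P Q : Pi -> R) x a :
  WP pol (mix s P Q) x a = (1 - s) * WP pol P x a + s * WP pol Q x a.
Proof. by rewrite /WP /mix big_split /= -!mulr_sumr. Qed.

Lemma ExB (g g' : X -> R) : E g - E g' = E (fun x => g x - g' x).
Proof. by rewrite /Ex sumrB mulrBr. Qed.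

Definition G (P0 : Pi -> R) (Z : vec R A X) :=
  E (fun x => \sum_a Z x a / Wp (WP pol P0) x a).

Lemma main_ineq (lam eps : R) (P0 : Pi -> R) : 0 <= lam -> is_dist P0 ->
  (forall Q, is_dist Q -> Fv lam P0 < Fv lam Q + eps) ->
  forall (Q : Pi -> R) (s : R), is_dist Q -> 0 < s <= 1 ->
  s * cc * (G P0 (WP pol Q) - G P0 (WP pol P0))
  <= eps + K * (s ^+ 2 / m ^+ 2)
     + lam * s * (etaf (WP pol P0) - etaf (WP pol Q)).
Proof.
move=> l0 dP0 hopt Q s dQ /andP[s0 s1].
have dPs : is_dist (mix s P0 Q) by apply: mix_dist => //; rewrite ltW.
have hF := hopt _ dPs.
have eq1 : Fv lam (mix s P0 Q) - Fv lam P0 =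
  E (fun x => \sum_a (ln (Wp (WP pol P0) x a) - ln (Wp (WP pol (mix s P0 Q)) x a)))
  - lam * (etaf (WP pol (mix s P0 Q)) - etaf (WP pol P0)).
  rewrite /Fv.
  have -> : forall a b c d : R, a - lam * b - (c - lam * d) = (a - c) - lam * (b - d)
    by move=> *; ring.
  rewrite ExB; congr (_ - _); apply: Ex_ext => i; rewrite sumrB; ring.
have eta_s : etaf (WP pol (mix s P0 Q)) = (1 - s) * etaf (WP pol P0) + s * etaf (WP pol Q).
  rewrite !eta_WP /mix (eq_bigr (fun p => (1-s)*(P0 p * etaf (polvec R pol p)) + s*(Q p * etaf (polvec R pol p)))).
    by rewrite big_split /= -!mulr_sumr.
  by move=> p _; ring.
have bnd : E (fun x => \sum_a (ln (Wp (WP pol P0) x a) - ln (Wp (WP pol (mix s P0 Q)) x a)))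
  <= E (fun x => \sum_a (- (s * cc) * (((WP pol Q) x a - (WP pol P0) x a) / Wp (WP pol P0) x a)
                        + s ^+ 2 / m ^+ 2)).
  apply: Ex_le => i; apply: ler_sum => a _.
  rewrite /Wprime WP_mix; apply: kp.
  - exact: mu_gt0.
  - by case/andP: cc_bounds => h1 h2; apply/andP; split => //; lra.
  - exact: WP_bounds.
  - exact: WP_bounds.
  - by rewrite s0 s1.
have eq2 : E (fun x => \sum_a (- (s * cc) * (((WP pol Q) x a - (WP pol P0) x a) / Wp (WP pol P0) x a)
                        + s ^+ 2 / m ^+ 2))
  = - (s * cc) * (G P0 (WP pol Q) - G P0 (WP pol P0)) + K * (s ^+ 2 / m ^+ 2).
  rewrite /G ExB -(Ex_cst (K * (s ^+ 2 / m ^+ 2))) -ExZ -ExD; apply: Ex_ext => i.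
  rewrite big_split /= sumr_const -mulr_sumr -sumrB; congr (_ + _).
    by congr (_ * _); apply: eq_bigr => a _; rewrite mulrBl.
  by rewrite /nK mulr_natl.
rewrite eta_s in eq1.
nra.
Qed.


Local Notation r := (Num.sqrt (K / bt)).

Lemma r_gt0 : 0 < r.
Proof. by rewrite sqrtr_gt0 divr_gt0 ?beta_gt0 // (lt_le_trans _ K_ge1). Qed.

Lemma K_r : K = bt * r ^+ 2.
Proof.
have b0 := beta_gt0.
rewrite sqr_sqrtr; first by field; rewrite gt_eqF.
apply: divr_ge0; [exact: le_trans _ K_ge1 | exact: ltW].
Qed.

Lemma G_ge0 (P0 Q : Pi -> R) : is_dist P0 -> is_dist Q -> 0 <= G P0 (WP pol Q).
Proof.
move=> dP dQ; rewrite -{1}(Ex_cst 0); apply: Ex_le => i /=.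
apply: sumr_ge0 => a _; apply: divr_ge0; first exact: WP_ge0.
have := Wp_bounds _ _ _ (WP_bounds P0 dP (hx i) a); have := mu_gt0.
move=> h /andP[h1 _]; lra.
Qed.

Lemma G_self (P0 : Pi -> R) : is_dist P0 -> cc * G P0 (WP pol P0) <= K.
Proof.
move=> dP; rewrite /G -ExZ -{2}(Ex_cst K); apply: Ex_le => i /=.
rewrite mulr_sumr.
apply: (@le_trans _ _ (\sum_(a : A) (1:R))); last by rewrite sumr_const.
apply: ler_sum => a _.
have [w0 w1] := andP (WP_bounds P0 dP (hx i) a).
have := cc_bounds; have := mu_gt0 => m0 /andP[c0 c1].
rewrite /Wprime mulrA ler_pdivrMr; nra.
Qed.

Lemma final_W : exists2 P0, is_dist P0 &
  Dl (WP pol P0) <= 6 * r /\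
  forall Q, is_dist Q -> G P0 (WP pol Q) <= Num.max (4 * K) (bt * Dl (WP pol Q) ^+ 2).
Proof.
set lam := bt * r / 4.
have l0 : 0 <= lam by rewrite /lam divr_ge0 // mulr_ge0 // ltW ?beta_gt0 ?r_gt0.
have m0 := mu_gt0.
have K1 := K_ge1.
set eps := K * m ^+ 2 / 16.
have e0 : 0 < eps by rewrite /eps divr_gt0 // mulr_gt0 ?exprn_gt0 // (lt_le_trans _ K_ge1).
have [P0 dP0 hopt] := approx lam eps l0 e0.
exists P0 => //.
set s := m ^+ 2 / 4.
have s0 : 0 < s by rewrite /s divr_gt0 // exprn_gt0.
have s1 : s <= 1.
  have := Kmu_le; rewrite /s => h.
  have : m <= 1 by nra.
  move=> h1; nra.
have key : forall Q, is_dist Q ->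
  cc * (G P0 (WP pol Q) - G P0 (WP pol P0)) <= K / 2 + lam * (Dl (WP pol Q) - Dl (WP pol P0)).
  move=> Q dQ.
  have := main_ineq lam eps P0 l0 dP0 hopt Q s dQ; rewrite s0 s1 => /(_ isT) h.
  have e1 : eps + K * (s ^+ 2 / m ^+ 2) + lam * s * (etaf (WP pol P0) - etaf (WP pol Q))
     = s * (K / 2 + lam * (Dl (WP pol Q) - Dl (WP pol P0))).
    rewrite !Dl_def /eps /s; field; rewrite gt_eqF //.
  rewrite e1 -mulrA ler_pM2l // in h.
have DW0 := Dl_WP_ge0 P0 dP0.
have GW0 := G_self P0 dP0.
have [c0 c1] := andP cc_bounds.
have bt0 := beta_gt0.
have r0 := r_gt0.
have Kr := K_r.
have hD : Dl (WP pol P0) <= 6 * r.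
  case: Mx_att => ps hps.
  set Qs := fun p : Pi => ((p == ps)%:R : R).
  have dQs : is_dist Qs.
    split=> [p|]; first by rewrite /Qs ler0n.
    by rewrite /Qs (bigD1 ps) //= eqxx big1 ?addr0 // => p /negbTE ->.
  have hQ : Dl (WP pol Qs) = 0.
    rewrite Dl_def eta_WP (bigD1 ps) //= /Qs eqxx mul1r big1 ?addr0 ?hps ?subrr //.
    by move=> p /negbTE ->; rewrite mul0r.
  have := key Qs dQs; rewrite hQ.
  have := G_ge0 P0 Qs dP0 dQs.
  rewrite /lam => g0 h.
  have : bt * r * Dl (WP pol P0) <= 6 * K by nra.
  move=> h2.
  have : bt * r * (Dl (WP pol P0) - 6 * r) <= 0 by nra.
  have btr : 0 < bt * r by rewrite mulr_gt0.
  by move=> h3; rewrite (pmulr_rle0 _ btr) subr_le0 in h3.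
split=> // Q dQ.
have := key Q dQ; have := G_ge0 P0 Q dP0 dQ; have := Dl_WP_ge0 Q dQ.
set D := Dl (WP pol Q); set g := G P0 (WP pol Q).
move=> D0 gg0 h.
have p1 : 0 <= (cc - 1/2) * g by rewrite mulr_ge0 // subr_ge0.
have p2 : 0 <= lam * Dl (WP pol P0) by rewrite mulr_ge0.
have hg : g <= 3 * K + 2 * lam * D by clear -h p1 p2 GW0 c0 gg0; nra.
rewrite le_max; apply/orP.
case: (lerP (2 * lam * D) K) => hc; [left; lra | right].
rewrite /lam in hg hc.
nra.
Qed.


Lemma Ex_sum (f : Pi -> X -> R) : \sum_p E (f p) = E (fun x => \sum_p f p x).
Proof. by rewrite /Ex -mulr_sumr exchange_big. Qed.

Lemma G_alt (P0 Q : Pi -> R) :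
  \sum_p Q p * E (fun x => ((1 - K * m) * WP pol P0 x (pol p x) + m)^-1)
  = G P0 (WP pol Q).
Proof.
under eq_bigr => p _ do rewrite -ExZ.
rewrite Ex_sum /G; apply: Ex_ext => i.
rewrite (partition_big (fun p => pol p (hx i)) predT) //=.
apply: eq_bigr => a _; rewrite /WP mulr_suml; apply: eq_bigr => p /eqP <-.
by rewrite /Wprime.
Qed.

Lemma sqrt_part : 8 * r <= 110 * Num.sqrt (K * Cc Pi delta t.-1 / (t.-1)%:R).
Proof.
have C0 : 0 < Cc Pi delta t.-1 by apply: Cc_gt0; case: t Ht => [|[|]].
have n0 := n_gt0.
have -> : K / bt = 180 * (K * Cc Pi delta t.-1 / (t.-1)%:R).
  by rewrite /beta; field; apply/andP; split; rewrite gt_eqF.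
rewrite sqrtrM // mulrA; apply: ler_wpM2r; first exact: sqrtr_ge0.
have s0 : 0 <= Num.sqrt (180 : R) by exact: sqrtr_ge0.
have s2 : Num.sqrt (180 : R) ^+ 2 = 180 by rewrite sqr_sqrtr.
nra.
Qed.

Lemma lemma15_sec : 
  (exists W : vec R A X,
     Delta pol hx ha hr hp W <= 8 * Num.sqrt (nK R A / beta Pi delta t)
     /\ inC pol hx W
     /\ forall Z : vec R A X, inC pol hx Z ->
          Ex hx (fun x => \sum_a Z x a / Wprime Pi delta t W x a)
          <= Num.max (4 * nK R A)
                     (beta Pi delta t * Delta pol hx ha hr hp Z ^+ 2))
  /\ OPT pol delta hx ha hr hp t <= 8 * Num.sqrt (nK R A / beta Pi delta t)
  /\ 8 * Num.sqrt (nK R A / beta Pi delta t)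
     <= 110 * Num.sqrt (nK R A * Cc Pi delta t.-1 / (t.-1)%:R).
Proof.
have [P0 dP0 [hD hG]] := final_W.
have r0 := r_gt0.
have hD8 : Dl (WP pol P0) <= 8 * r by lra.
split; last split; last exact: sqrt_part.
- exists (WP pol P0); split => //; split; first by exists P0.
  move=> Z [Q [dQ hZ]].
  have -> : Dl Z = Dl (WP pol Q) by rewrite !Dl_def (eta_ext _ _ hZ).
  have -> : E (fun x => \sum_a Z x a / Wp (WP pol P0) x a) = G P0 (WP pol Q).
    by rewrite /G; apply: Ex_ext => i; apply: eq_bigr => a _; rewrite hZ.
  exact: hG.
- rewrite /OPT; apply: le_trans hD8.
  have hlb : has_lbound [set \sum_p P p * Dl (polvec R pol p) | P in rucb_feasible pol delta hx ha hr hp t]%classic.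
    exists 0 => _ [P [[Pp _] _] <-]; apply: sumr_ge0 => p _.
    by rewrite mulr_ge0 // Dl_def subr_ge0 Mx_ub.
  apply: (ge_inf hlb); exists P0; last first.
    rewrite Dl_WP //; apply: eq_bigr => p _; by rewrite Dl_def.
  split => // Q dQ.
  rewrite G_alt.
  have -> : (t.-1)%:R * Dl (WP pol Q) ^+ 2 / (180 * Cc Pi delta t.-1) = bt * Dl (WP pol Q) ^+ 2.
    by rewrite /beta mulrAC.
  exact: hG.
Qed.

End L15.

Theorem lemma15 (R : realType) (A : finType) (X : Type) (Pi : finType)
  (pol : Pi -> X -> A) (delta : R) (t : nat)
  (hx : 'I_t.-1 -> X) (ha : 'I_t.-1 -> A) (hr hp : 'I_t.-1 -> R) :
  (0 < #|A|)%N -> (0 < #|Pi|)%N -> injective pol ->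
  0 < delta < 1 -> (2 <= t)%N ->
  (forall i, 0 <= hr i <= 1) -> (forall i, 0 < hp i <= 1) ->
  (exists W : vec R A X,
     Delta pol hx ha hr hp W <= 8 * Num.sqrt (nK R A / beta Pi delta t)
     /\ inC pol hx W
     /\ forall Z : vec R A X, inC pol hx Z ->
          Ex hx (fun x => \sum_a Z x a / Wprime Pi delta t W x a)
          <= Num.max (4 * nK R A)
                     (beta Pi delta t * Delta pol hx ha hr hp Z ^+ 2))
  /\ OPT pol delta hx ha hr hp t <= 8 * Num.sqrt (nK R A / beta Pi delta t)
  /\ 8 * Num.sqrt (nK R A / beta Pi delta t)
     <= 110 * Num.sqrt (nK R A * Cc Pi delta t.-1 / (t.-1)%:R).
Proof.
move=> HA HPi _ Hd Ht Hr Hp.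
by apply: lemma15_sec.
Qed.
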